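(* Let $R$ be a commutative ring, $C=(c_{ij})_{i,j=1}^n$ a matrix with entries in $R$, and ${\bf a}=(a_i)_{i=1}^n$, ${\bf b}=(b_i)_{i=1}^n$ vectors with entries in $R$. Then $$\det({\bf a}{\bf b}^{\mathrm T}-C)=\det(-C)+\sum_{\vec G}(-1)^{\#(\text{cycles of }\vec G)}\,b_{s(\vec G)}\,a_{t(\vec G)}\prod_{ij\in E(\vec G)}c_{ij},$$ where the sum runs over all directed graphs $\vec G$ on the vertex set $\{1,\ldots,n\}$ in which one connected component is a directed path (possibly of length $0$, i.e. an isolated vertex) from a source $s(\vec G)$ to a sink $t(\vec G)$ and all other connected components are directed cycles (possibly of length $1$, i.e. a loop $ii$).
   Context: In a directed graph, $ij\in E(\vec G)$ denotes a directed edge from $i$ to $j$ (a loop $ii$ contributes $c_{ii}$). Every vertex of $\{1,\ldots,n\}$ belongs to exactly one component of $\vec G$. The determinant is $\det A=\sum_{\pi}\mathrm{sgn}(\pi)\prod_i a_{i\pi(i)}$. *)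

(* Defs.v *)
From mathcomp Require Import all_boot all_order all_algebra all_fingroup.
Set Implicit Arguments. Unset Strict Implicit. Unset Printing Implicit Defensive.
Import GRing.Theory.

(* A directed graph on the vertex set 'I_n (= {1,...,n}) is given by its set
   of directed edges E : {set 'I_n * 'I_n}; (i, j) \in E is the edge ij,
   and (i, i) is a loop. *)

Definition path_edges (T : Type) (p : seq T) : seq (T * T) :=
  if p is x :: p' then zip (x :: p') p' else [::].

Definition cycle_edges (T : Type) (c : seq T) : seq (T * T) :=
  if c is x :: c' then zip (x :: c') (rcons c' x) else [::].

(* E is a graph whose connected components are one directed path
   (vertex sequence p, possibly a single vertex) from source s to sink t,
   and directed cycles (vertex sequences in cs); the vertex sets of these
   components partition {1,...,n}. *)
Definition path_cycle_graph (n : nat) (E : {set 'I_n * 'I_n}) (s t : 'I_n) : Prop :=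
  exists (p : seq 'I_n) (cs : seq (seq 'I_n)),
    [/\ perm_eq (p ++ flatten cs) (enum 'I_n),
        exists p', p = s :: p' /\ last s p' = t,
        all (fun c => c != [::]) cs &
        E = [set e | (e \in path_edges p) || has (fun c => e \in cycle_edges c) cs]].

Definition wadj (n : nat) (E : {set 'I_n * 'I_n}) : rel 'I_n :=
  fun u v => ((u, v) \in E) || ((v, u) \in E).

Definition ncomponents (n : nat) (E : {set 'I_n * 'I_n}) : nat :=
  n_comp (wadj E) 'I_n.

(* For a path-cycle graph, all components but the path one are cycles. *)
Definition ncycles (n : nat) (E : {set 'I_n * 'I_n}) : nat :=
  (ncomponents E).-1.

From Stdlib Require Import ClassicalEpsilon.
Definition path_cycle_graphb (n : nat) (E : {set 'I_n * 'I_n}) (s t : 'I_n) : bool :=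
  if excluded_middle_informative (path_cycle_graph E s t) then true else false.

(* Main.v *)
Require Import Defs.
From mathcomp Require Import all_boot all_order all_algebra all_fingroup.
From Stdlib Require Import ClassicalEpsilon.
Set Implicit Arguments. Unset Strict Implicit. Unset Printing Implicit Defensive.
Import GRing.Theory.

Section Lists.
Variable T : eqType.

Lemma zip_memP (A B : seq T) x0 y0 e : e \in zip A B ->
  exists2 k, k < minn (size A) (size B) & e = (nth x0 A k, nth y0 B k).
Proof.
move/(nthP (x0, y0)) => [k hk <-]; exists k; first by rewrite size_zip in hk.
by rewrite nth_zip_cond hk.
Qed.

Lemma zip_nth_mem (A B : seq T) x0 y0 k : k < minn (size A) (size B) ->
  (nth x0 A k, nth y0 B k) \in zip A B.
Proof.
move=> hk; have := @mem_nth _ (x0, y0) (zip A B) k.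
by rewrite size_zip hk nth_zip_cond size_zip hk => ->.
Qed.

Lemma zip_mem1 (A B : seq T) u v : (u, v) \in zip A B -> u \in A.
Proof.
case/(zip_memP u v) => k hk [-> _]; apply: mem_nth.
by apply: leq_trans hk (geq_minl _ _).
Qed.

Lemma zip_mem2 (A B : seq T) u v : (u, v) \in zip A B -> v \in B.
Proof.
case/(zip_memP u v) => k hk [_ ->]; apply: mem_nth.
by apply: leq_trans hk (geq_minr _ _).
Qed.

Lemma zip_out (A B : seq T) u v v' : uniq A -> size A = size B ->
  (u, v) \in zip A B -> (u, v') \in zip A B -> v = v'.
Proof.
move=> uA sAB /(zip_memP u v) [k hk [e1 e2]] /(zip_memP u v) [k' hk' [e1' e2']].
rewrite -sAB minnn in hk hk'.
have : nth u A k == nth u A k' by rewrite -e1 -e1'.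
by rewrite nth_uniq // => /eqP ek; rewrite e2 e2' ek.
Qed.

Lemma zip_in (A B : seq T) u u' v : uniq B -> size A = size B ->
  (u, v) \in zip A B -> (u', v) \in zip A B -> u = u'.
Proof.
move=> uB sAB /(zip_memP u v) [k hk [e1 e2]] /(zip_memP u v) [k' hk' [e1' e2']].
rewrite sAB minnn in hk hk'.
have : nth v B k == nth v B k' by rewrite -e2 -e2'.
by rewrite nth_uniq // => /eqP ek; rewrite e1 e1' ek.
Qed.

Lemma cycle_edgesE (c : seq T) : cycle_edges c = zip c (rot 1 c).
Proof. by case: c => [|x l] //=; rewrite rot1_cons. Qed.

Lemma path_edgesE x (l : seq T) : path_edges (x :: l) = zip (x :: l) l.
Proof. by []. Qed.

Lemma cycle_edges_f (f : T -> T) (c : seq T) u v : fcycle f c ->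
  (u, v) \in cycle_edges c -> v = f u.
Proof.
case: c => [|x l] //= Hc /(zip_memP x x) [k hk [-> ->]].
rewrite size_rcons minnn in hk.
have := pathP x Hc k; rewrite size_rcons => /(_ hk) /eqP <-.
congr f; case: k hk => [|k] //= hk.
by rewrite nth_rcons ltnS in hk *; rewrite hk.
Qed.

Lemma cycle_edges_ex (c : seq T) u : u \in c -> exists v, (u, v) \in cycle_edges c.
Proof.
move=> uc; exists (nth u (rot 1 c) (index u c)).
rewrite cycle_edgesE -{1}(nth_index u uc); apply: zip_nth_mem.
by rewrite size_rot minnn index_mem.
Qed.

Lemma cycle_edges_fx (f : T -> T) (c : seq T) u : fcycle f c -> u \in c ->
  (u, f u) \in cycle_edges c.
Proof.
move=> Hc /cycle_edges_ex [v Hv]; by rewrite -(cycle_edges_f Hc Hv).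
Qed.

Lemma path_edges_f (f : T -> T) x (l : seq T) u v : fpath f x l ->
  (u, v) \in zip (x :: l) l ->
  exists2 k, k < size l & [/\ u = nth x (x :: l) k, v = nth x l k & v = f u].
Proof.
move=> Hp /(zip_memP x x) [k hk [-> ->]].
have {}hk : k < size l by apply: leq_trans hk (geq_minr _ _).
exists k => //; split => //.
have := pathP x Hp k hk; by move/eqP => <-.
Qed.

Lemma uniq_flatten_in (Ls : seq (seq T)) (c1 c2 : seq T) u : uniq (flatten Ls) ->
  c1 \in Ls -> c2 \in Ls -> u \in c1 -> u \in c2 -> c1 = c2.
Proof.
elim: Ls => [|c Ls IH] //=; rewrite cat_uniq => /and3P [_ hd uL].
rewrite !inE => /orP [/eqP -> | h1] /orP [/eqP -> | h2] // u1 u2.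
- case/hasP: hd; exists u => //; apply/flattenP; by exists c2.
- case/hasP: hd; exists u => //; apply/flattenP; by exists c1.
- exact: IH.
Qed.

Lemma uniq_flatten_mem (Ls : seq (seq T)) (c : seq T) : uniq (flatten Ls) -> c \in Ls -> uniq c.
Proof.
elim: Ls => [|c' Ls IH] //=; rewrite cat_uniq => /and3P [uc _ uL].
by rewrite inE => /orP [/eqP -> | h] //; apply: IH.
Qed.

End Lists.

Lemma pcg_deg n (E : {set 'I_n * 'I_n}) s t : path_cycle_graph E s t ->
 [/\ (forall u v v', (u,v) \in E -> (u,v') \in E -> v = v'),
     (forall u u' v, (u,v) \in E -> (u',v) \in E -> u = u'),
     (forall v, (t,v) \notin E), (forall u, (u,s) \notin E) &
     (forall u, u != t -> exists v, (u,v) \in E)].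
Proof.
move=> [p [cs [Hperm [p' [Hp Hl]] Hne HE]]]; subst p.
have U : uniq ((s :: p') ++ flatten cs) by rewrite (perm_uniq Hperm) enum_uniq.
have Uf : uniq (flatten ((s :: p') :: cs)) := U.
have Up : uniq (s :: p') by move: U; rewrite cat_uniq => /and3P [].
have Dis : forall x, x \in s :: p' -> x \in flatten cs -> False.
  move=> x x1 x2; move: U; rewrite cat_uniq => /and3P [_ /hasP H _].
  by apply: H; exists x.
have Et : t = nth s (s :: p') (size p') by rewrite -Hl (nth_last s (s :: p')).
have tp : t \in s :: p' by rewrite -Hl mem_last.
have inE' : forall e, (e \in E) = (e \in zip (s :: p') p') ||
                                  has (fun c => e \in cycle_edges c) cs.
  by move=> e; rewrite HE inE.
have edge_in : forall u v, (u, v) \in E ->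
    exists2 c, c \in (s :: p') :: cs & (u, v) \in zip c (rot 1 c).
  move=> u v; rewrite inE' => /orP [H | /hasP [c Hc H]].
  - exists (s :: p'); first by rewrite inE eqxx.
    case/(zip_memP s s): H => k hk [-> ->].
    have hk' : k < size p' by apply: leq_trans hk (geq_minr _ _).
    rewrite rot1_cons -[nth s p' k](nth_rcons_default s) .
    apply: zip_nth_mem; rewrite size_rcons minnn /=; exact: leqW.
  - exists c; first by rewrite inE Hc orbT.
    by rewrite -cycle_edgesE.
split.
- move=> u v v' /edge_in [c1 H1 e1] /edge_in [c2 H2 e2].
  have c12 : c1 = c2 by apply: (uniq_flatten_in Uf H1 H2 (zip_mem1 e1) (zip_mem1 e2)).
  subst c2; apply: (zip_out _ _ e1 e2); first exact: uniq_flatten_mem Uf H1.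
  by rewrite size_rot.
- move=> u u' v /edge_in [c1 H1 e1] /edge_in [c2 H2 e2].
  have m1 : v \in c1 by rewrite -(mem_rot 1); exact: zip_mem2 e1.
  have m2 : v \in c2 by rewrite -(mem_rot 1); exact: zip_mem2 e2.
  have c12 : c1 = c2 by apply: (uniq_flatten_in Uf H1 H2 m1 m2).
  subst c2; apply: (zip_in _ _ e1 e2); last by rewrite size_rot.
  by rewrite rot_uniq; exact: uniq_flatten_mem Uf H1.
- move=> v; rewrite inE'; apply/negP => /orP [H | /hasP [c Hc H]].
  + case/(zip_memP s s): H => k hk [ek _].
    have hk' : k < size p' by apply: leq_trans hk (geq_minr _ _).
    move/eqP: ek; rewrite Et nth_uniq //= ?ltnS ?leqnn ?(ltnW hk') //.
    by move/eqP => ek; rewrite ek ltnn in hk'.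
  + apply: (Dis t tp); apply/flattenP; exists c => //.
    by rewrite cycle_edgesE in H; exact: zip_mem1 H.
- move=> u; rewrite inE'; apply/negP => /orP [H | /hasP [c Hc H]].
  + case/(zip_memP s s): H => k hk [_ ek].
    have hk' : k < size p' by apply: leq_trans hk (geq_minr _ _).
    move/eqP: ek; rewrite (_ : nth s p' k = nth s (s :: p') k.+1) //.
    rewrite -{1}[s]/(nth s (s :: p') 0) nth_uniq //=.
  + apply: (Dis s (mem_head _ _)); apply/flattenP; exists c => //.
    rewrite cycle_edgesE in H; have := zip_mem2 H; by rewrite mem_rot.
- move=> u ut.
  have : u \in (s :: p') ++ flatten cs by rewrite (perm_mem Hperm) mem_enum.
  rewrite mem_cat => /orP [up | /flattenP [c Hc uc]].
  + set k := index u (s :: p').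
    have hk : k < (size p').+1 by rewrite -[(size p').+1]/(size (s :: p')) index_mem.
    have hk' : k < size p'.
      rewrite ltn_neqAle -ltnS hk andbT; apply/eqP => ek.
      by move/eqP: ut; apply; rewrite Et -ek nth_index.
    exists (nth s p' k); rewrite inE'; apply/orP; left.
    have -> : u = nth s (s :: p') k by rewrite nth_index.
    by apply: zip_nth_mem; rewrite /= leq_min hk' ltnW.
  + case: (cycle_edges_ex uc) => v Hv; exists v; rewrite inE'; apply/orP; right.
    by apply/hasP; exists c.
Qed.

Definition phi n (t : 'I_n) (sg : 'S_n) : {set 'I_n * 'I_n} :=
  [set (i, sg i) | i in [set~ t]].

Lemma mem_phi n (t : 'I_n) sg u v : ((u, v) \in phi t sg) = (u != t) && (v == sg u).
Proof.
apply/imsetP/andP => [[i] | [ut /eqP ->]].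
- by rewrite !inE => it [-> ->]; rewrite it eqxx.
- by exists u; rewrite // !inE.
Qed.

Lemma pcg_perm n (E : {set 'I_n * 'I_n}) s t : path_cycle_graph E s t ->
  exists sg : 'S_n, sg t = s /\ E = phi t sg.
Proof.
move=> H; have [O I T S X] := pcg_deg H.
pose f u := if u == t then s else odflt u [pick v | (u, v) \in E].
have fE : forall u, u != t -> (u, f u) \in E.
  move=> u ut; rewrite /f (negbTE ut); case: pickP => [v //| none].
  by case: (X u ut) => v Hv; rewrite none in Hv.
have finj : injective f.
  move=> u u'; case: (eqVneq u t) => [-> | ut]; case: (eqVneq u' t) => [-> | u't] //.
  - rewrite {1}/f eqxx => Es; have := fE u' u't; by rewrite -Es (negbTE (S u')).
  - rewrite {2}/f eqxx => Es; have := fE u ut; by rewrite Es (negbTE (S u)).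
  - move=> Ef; apply: (I _ _ (f u) (fE u ut)); rewrite Ef; exact: fE.
exists (perm finj); split; first by rewrite permE /f eqxx.
apply/setP => -[u v]; rewrite mem_phi permE; apply/idP/andP => [Huv | [ut /eqP ->]].
- have ut : u != t by apply: contraTneq Huv => ->; rewrite (negbTE (T v)).
  by split => //; rewrite (O _ _ _ Huv (fE u ut)).
- exact: fE.
Qed.

Lemma phi_inj n (t s : 'I_n) : {in [set sg : 'S_n | sg t == s] &, injective (phi t)}.
Proof.
move=> sg sg'; rewrite !inE => /eqP e1 /eqP e2 Ep; apply/permP => i.
case: (eqVneq i t) => [-> | it]; first by rewrite e1 e2.
have : (i, sg i) \in phi t sg' by rewrite -Ep mem_phi it eqxx.
by rewrite mem_phi => /andP [_ /eqP].
Qed.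

Lemma uniq_flatten_orbits (T : finType) (f : T -> T) (R : seq T) : injective f ->
  uniq R -> (forall x, x \in R -> froot f x = x) -> uniq (flatten (map (fingraph.orbit f) R)).
Proof.
move=> injf; have symf : connect_sym (frel f) := fconnect_sym injf.
elim: R => [|x R IH] //= /andP [xR uR] Hr.
rewrite cat_uniq fingraph.orbit_uniq IH ?andbT //; last first.
  by move=> y yR; apply: Hr; rewrite inE yR orbT.
apply/hasPn => y /flattenP [c /mapP [x' x'R ->] yx']; apply/negP => yx.
rewrite -fconnect_orbit in yx yx'.
have : froot f x = froot f x'.
  apply/eqP; rewrite (root_connect symf); apply: connect_trans yx _.
  by rewrite symf fconnect_orbit.
rewrite Hr ?inE ?eqxx // Hr ?inE ?x'R ?orbT // => exx'.
by rewrite exx' x'R in xR.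
Qed.

Lemma phi_pcg n (t s : 'I_n) (sg : 'S_n) : sg t = s -> path_cycle_graph (phi t sg) s t.
Proof.
move=> Hts.
have injs : injective sg := @perm_inj _ sg.
have symf : connect_sym (frel sg) := fconnect_sym injs.
pose p' := traject sg (sg s) (fingraph.order sg s).-1.
have Hp : fingraph.orbit sg s = s :: p' by rewrite /fingraph.orbit -orderSpred.
have Cp : fcycle sg (s :: p') by rewrite -Hp; exact: (cycle_orbit injs s).
have Pp : fpath sg s p' by move: Cp; rewrite /= rcons_path => /andP [].
have Hl : last s p' = t.
  by move: Cp; rewrite /= rcons_path => /andP [_ /eqP]; rewrite -Hts => /injs.
pose R := [seq x <- enum 'I_n | (froot sg x == x) && ~~ fconnect sg s x].
pose cs := map (fingraph.orbit sg) R.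
have Up : uniq (s :: p') by rewrite -Hp fingraph.orbit_uniq.
have Ucs : uniq (flatten cs).
  apply: uniq_flatten_orbits => //; first by rewrite filter_uniq ?enum_uniq.
  by move=> x; rewrite mem_filter => /andP [/andP [/eqP -> _] _].
have inp : forall y, (y \in s :: p') = fconnect sg s y by move=> y; rewrite -Hp fconnect_orbit.
have incs : forall y, y \in flatten cs -> ~~ fconnect sg s y.
  move=> y /flattenP [c /mapP [x xR ->] yx]; apply/negP => sy.
  move: xR; rewrite mem_filter => /andP [/andP [_ /negP Hn] _]; apply: Hn.
  apply: connect_trans sy _; by rewrite symf fconnect_orbit.
have Dis : forall y, y \in s :: p' -> y \in flatten cs -> False.
  by move=> y; rewrite inp => H1 /incs; rewrite H1.
have Mem : forall y, y \in (s :: p') ++ flatten cs.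
  move=> y; rewrite mem_cat inp; case: (boolP (fconnect sg s y)) => //= sy.
  apply/flattenP; exists (fingraph.orbit sg (froot sg y)); first apply: map_f.
    rewrite mem_filter mem_enum andbT (root_root symf) eqxx /=.
    apply: contra sy => H; apply: connect_trans H _; by rewrite symf connect_root.
  by rewrite -fconnect_orbit symf connect_root.
have Et : t = nth s (s :: p') (size p') by rewrite -Hl (nth_last s (s :: p')).
have tp : t \in s :: p' by rewrite -Hl mem_last.
exists (s :: p'), cs; split.
- apply: uniq_perm; last by move=> y; rewrite Mem mem_enum.
    rewrite cat_uniq Up Ucs andbT /=; apply/hasPn => y y1; apply/negP => y2.
    exact: Dis y2 y1.
  exact: enum_uniq.
- by exists p'.
- apply/allP => c /mapP [x _ ->]; have := in_orbit sg x; by case: (fingraph.orbit sg x).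
apply/setP => -[u v]; rewrite mem_phi inE path_edgesE.
apply/andP/orP => [[ut /eqP ->] | [H | /hasP [c Hc H]]].
- have := Mem u; rewrite mem_cat => /orP [up | /flattenP [c Hc uc]].
  + left; set k := index u (s :: p').
    have hk : k < (size p').+1 by rewrite -[(size p').+1]/(size (s :: p')) index_mem.
    have hk' : k < size p'.
      rewrite ltn_neqAle -ltnS hk andbT; apply/eqP => ek.
      by move/eqP: ut; apply; rewrite Et -ek nth_index.
    have Eu : u = nth s (s :: p') k by rewrite nth_index.
    have := pathP s Pp k hk' => /eqP; rewrite -Eu => ->; rewrite {1}Eu.
    by apply: zip_nth_mem; rewrite /= leq_min hk' ltnW.
  + right; apply/hasP; exists c => //.
    apply: cycle_edges_fx uc; case/mapP: Hc => x _ ->; exact: (cycle_orbit injs x).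
- case: (path_edges_f Pp H) => k hk [eu ev ->]; split => //.
  apply/eqP => ut; move/eqP: ut; rewrite eu Et nth_uniq //= ?ltnS ?leqnn ?(ltnW hk) //.
  by move/eqP => ek; rewrite ek ltnn in hk.
- have Cc : fcycle sg c by case/mapP: Hc => x _ ->; exact: (cycle_orbit injs x).
  rewrite (cycle_edges_f Cc H) eqxx; split => //.
  apply/eqP => ut; subst u; apply: (Dis t tp); apply/flattenP; exists c => //.
  by rewrite cycle_edgesE in H; exact: zip_mem1 H.
Qed.

Lemma mem_porbitE (T : finType) (sg : {perm T}) x y :
  (y \in porbit sg x) = fconnect sg x y.
Proof.
apply/porbitP/idP => [[i ->] | H]; first by rewrite permX fconnect_iter.
by exists (findex sg x y); rewrite permX iter_findex.
Qed.

Lemma card_porbits (T : finType) (sg : {perm T}) :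
  #|porbits sg| = n_comp (frel sg) T.
Proof.
have injs : injective sg := @perm_inj _ sg.
have symf : connect_sym (frel sg) := fconnect_sym injs.
have rootE : forall x, porbit sg x = porbit sg (froot sg x).
  move=> x; apply/eqP; rewrite eq_porbit_mem mem_porbitE symf.
  exact: connect_root.
have -> : porbits sg = porbit sg @: [set x | froots sg x].
  apply/setP => P; apply/imsetP/imsetP => [[x _ ->] | [x _ ->]]; last by exists x.
  exists (froot sg x); last exact: rootE.
  by rewrite inE /roots (root_root symf).
rewrite card_in_imset; last first.
  move=> x y; rewrite !inE /roots => /eqP rx /eqP ry Exy.
  have : y \in porbit sg x by rewrite Exy; apply/porbitP; exists 0; rewrite expg0 perm1.
  by rewrite mem_porbitE -(root_connect symf) rx ry => /eqP.
rewrite cardsE /n_comp_mem; apply: eq_card => x /=.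
by rewrite !inE andbT.
Qed.

Lemma ncomp_phi n (t : 'I_n) (sg : 'S_n) : ncomponents (phi t sg) = #|porbits sg|.
Proof.
have injs : injective sg := @perm_inj _ sg.
have symf : connect_sym (frel sg) := fconnect_sym injs.
have wsym : symmetric (wadj (phi t sg)) by move=> u v; rewrite /wadj orbC.
have sw : connect_sym (wadj (phi t sg)) := sym_connect_sym wsym.
have step : forall u, u != t -> wadj (phi t sg) u (sg u).
  by move=> u ut; rewrite /wadj mem_phi ut eqxx.
have eqc : connect (wadj (phi t sg)) =2 fconnect sg.
  move=> x y; apply/idP/idP.
  - apply: connect_sub => u v; rewrite /wadj !mem_phi.
    case/orP => /andP [_ /eqP ->]; last rewrite symf; exact: fconnect1.
  - apply: connect_sub => u v /eqP <-.
    case: (eqVneq u t) => [-> | ut]; last by apply: connect1; apply: step.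
    have ct : fconnect sg (sg t) t by rewrite symf; exact: fconnect1.
    set k := findex sg (sg t) t.
    have hk := findex_max ct; have ek := iter_findex ct.
    suff H : forall j, j <= k -> connect (wadj (phi t sg)) (sg t) (iter j sg (sg t)).
      by rewrite sw; have := H k (leqnn k); rewrite ek.
    elim => [|j IH] hj; first exact: connect0.
    apply: connect_trans (IH (ltnW hj)) _; rewrite iterS; apply: connect1; apply: step.
    apply/eqP => ej; have := findex_iter (ltn_trans hj hk); rewrite ej -/k => ejk.
    by rewrite ejk ltnn in hj.
rewrite /ncomponents (eq_n_comp eqc) -card_porbits.
by [].
Qed.
Local Open Scope ring_scope.

Section Main.
Variable R : comPzRingType.

Lemma sign_aux (n k : nat) : (0 < n)%N -> (0 < k)%N ->
  (-1) ^+ (odd n (+) odd k) * (-1) ^+ n.-1 = (-1) ^+ k.-1 :> R.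
Proof.
case: n => [|n] //; case: k => [|k] // _ _ /=.
rewrite signr_addb -[(-1) ^+ n](signr_odd) -[(-1) ^+ k](signr_odd).
by case: (odd n); case: (odd k); rewrite /= ?expr0 ?expr1 ?mulr1 ?mul1r ?mulrNN ?mulr1.
Qed.

Lemma partA n (C : 'M[R]_n) (a b : 'cV[R]_n) :
 \det (a *m b^T - C) = \det (- C) +
   \sum_t a t ord0 * \sum_(sg : 'S_n) (-1) ^+ sg * (b (sg t) ord0 * \prod_(i | i != t) (- C i (sg i))).
Proof.
set M := - C.
pose BJ (J : {set 'I_n}) := \matrix_(i, j) (if i \in J then b j ord0 else M i j).
pose G (J : {set 'I_n}) := (\prod_(i in J) a i ord0) * \det (BJ J).
have eX : a *m b^T - C = \matrix_(i, j) (a i ord0 * b j ord0 + M i j).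
  by apply/matrixP => i j; rewrite !mxE big_ord1 !mxE.
have step1 : \det (a *m b^T - C) = \sum_J G J.
  rewrite eX /G /(\det _).
  transitivity (\sum_(sg : 'S_n) \sum_(J : {set 'I_n})
      (-1) ^+ sg * ((\prod_(i in J) a i ord0) * \prod_i BJ J i (sg i))).
    apply: eq_bigr => sg _.
    rewrite (eq_bigr (fun i => a i ord0 * b (sg i) ord0 + M i (sg i))); last first.
      by move=> i _; rewrite mxE.
    rewrite bigA_distr mulr_sumr; apply: eq_bigr => J _; congr (_ * _).
    rewrite (big_mkcond (fun i => i \in J)) -big_split /=; apply: eq_bigr => i _.
    by rewrite /BJ mxE; case: (i \in J); rewrite ?mul1r.
  rewrite exchange_big /=; apply: eq_bigr => J _.
  rewrite mulr_sumr; apply: eq_bigr => sg _; by rewrite mulrCA.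
have zero : forall J : {set 'I_n}, (1 < #|J|)%N -> G J = 0.
  move=> J /card_gt1P [x [y [xJ yJ xy]]].
  rewrite /G (determinant_alternate xy) ?mulr0 // => j.
  by rewrite /BJ !mxE xJ yJ.
rewrite step1 (bigD1 set0) //=; congr (_ + _).
  rewrite /G big_set0 mul1r; congr (\det _); apply/matrixP => i j.
  by rewrite /BJ !mxE in_set0.
rewrite (bigID (fun J : {set 'I_n} => #|J| == 1%N)) /= [X in _ + X]big1 ?addr0; last first.
  move=> J /andP [J0 J1]; apply: zero.
  by rewrite ltn_neqAle eq_sym J1 card_gt0.
rewrite (eq_bigl (fun J => J \in set1 @: [set: 'I_n])); last first.
  move=> J; apply/andP/imsetP => [[_ /cards1P [x ->]] | [x _ ->]]; first by exists x.
  split; last by rewrite cards1.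
  by apply/set0Pn; exists x; rewrite inE.
rewrite big_imset /=; last by move=> x y _ _; exact: set1_inj.
apply: eq_big => [t | t _]; first by rewrite inE.
rewrite /G big_set1; congr (_ * _).
rewrite /(\det _); apply: eq_bigr => sg _; congr (_ * _).
rewrite (bigD1 t) //= /BJ !mxE set11; congr (_ * _).
by apply: eq_bigr => i it; rewrite !mxE in_set1 (negbTE it).
Qed.

Lemma pcgbE n (E : {set 'I_n * 'I_n}) s t :
  path_cycle_graphb E s t = true <-> path_cycle_graph E s t.
Proof.
by rewrite /path_cycle_graphb; case: ClassicalEpsilon.excluded_middle_informative.
Qed.

Lemma keyK n (C : 'M[R]_n) (s t : 'I_n) :
 \sum_(sg : 'S_n | sg t == s) (-1) ^+ sg * \prod_(i | i != t) (- C i (sg i)) =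
 \sum_(E : {set 'I_n * 'I_n}) (if path_cycle_graphb E s t
      then (-1) ^+ ncycles E * \prod_(e in E) C e.1 e.2 else 0).
Proof.
set A := [set sg : 'S_n | sg t == s].
rewrite (bigID (fun E => E \in phi t @: A)) /= [X in _ = _ + X]big1 ?addr0; last first.
  move=> E HE; case: ifP => // /pcgbE /pcg_perm [sg [e1 e2]].
  by case/negP: HE; rewrite e2; apply: imset_f; rewrite inE e1.
rewrite big_imset /=; last exact: phi_inj.
apply: eq_big => [sg | sg]; first by rewrite inE.
move=> /eqP Hs.
have -> : path_cycle_graphb (phi t sg) s t by apply/pcgbE; exact: phi_pcg.
rewrite /ncycles ncomp_phi.
rewrite (big_imset (fun e => C e.1 e.2)) /=; last by move=> x y _ _ [].
rewrite (eq_bigl (fun i => i \in [set~ t])); last by move=> i; rewrite !inE.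
rewrite prodrN cardsC1 card_ord mulrA; congr (_ * _).
rewrite /odd_perm card_ord; apply: sign_aux.
  by case: n C s t sg Hs A => [|n] C s t; [case: t | ].
rewrite card_gt0; apply/set0Pn; exists (porbit sg t); exact: imset_f.
Qed.

End Main.

Theorem lemmaA4 (R : comPzRingType) (n : nat) (C : 'M[R]_n) (a b : 'cV[R]_n) :
  \det (a *m b^T - C) =
  \det (- C) +
  \sum_(E : {set 'I_n * 'I_n}) \sum_(s : 'I_n) \sum_(t : 'I_n)
     (if path_cycle_graphb E s t
      then (-1) ^+ ncycles E * b s ord0 * a t ord0 * \prod_(e in E) C e.1 e.2
      else 0).
Proof.
rewrite partA; congr (_ + _).
have -> : \sum_(E : {set 'I_n * 'I_n}) \sum_(s : 'I_n) \sum_(t : 'I_n)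
     (if path_cycle_graphb E s t
      then (-1) ^+ ncycles E * b s ord0 * a t ord0 * \prod_(e in E) C e.1 e.2
      else 0) =
   \sum_(t : 'I_n) \sum_(s : 'I_n) \sum_(E : {set 'I_n * 'I_n})
     (if path_cycle_graphb E s t
      then (-1) ^+ ncycles E * b s ord0 * a t ord0 * \prod_(e in E) C e.1 e.2
      else 0).
  rewrite exchange_big /=.
  rewrite (eq_bigr (fun s => \sum_t \sum_E (if path_cycle_graphb E s t
      then (-1) ^+ ncycles E * b s ord0 * a t ord0 * \prod_(e in E) C e.1 e.2
      else 0))); last by move=> s _; rewrite exchange_big.
  by rewrite exchange_big.
apply: eq_bigr => t _.
rewrite (partition_big (fun sg : 'S_n => sg t) xpredT) //= mulr_sumr.
apply: eq_bigr => s _.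
rewrite (eq_bigr (fun sg : 'S_n => b s ord0 * ((-1) ^+ sg * \prod_(i | i != t) (- C i (sg i))))); last first.
  by move=> sg /eqP <-; rewrite mulrCA.
rewrite -mulr_sumr keyK !mulr_sumr; apply: eq_bigr => E _.
case: ifP => _; last by rewrite !mulr0.
by rewrite !mulrA; congr (_ * _); rewrite mulrC [a t ord0 * _]mulrC mulrA.
Qed.
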